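(* Let $q$ be an odd prime power and $\lambda,\mu$ positive integers with $\mu\le\lambda$. (a) If $q\equiv3\pmod4$ and $\lambda$ is odd, then both $\frac{(q^{\mu}+1)(q^{\lambda-\mu}+1)}{2(q^{\lambda}+1)}{\lambda\brack\mu}_{q^2}$ and $\frac{(q^{\mu}-1)(q^{\lambda-\mu}-1)}{2(q^{\lambda}+1)}{\lambda\brack\mu}_{q^2}$ are integers. (b) If either $q\equiv3\pmod4$ and $\lambda$ is even, or $q\equiv1\pmod4$, then both $\frac{(q^{\mu}+1)(q^{\lambda-\mu}-1)}{2(q^{\lambda}-1)}{\lambda\brack\mu}_{q^2}$ and $\frac{(q^{\mu}-1)(q^{\lambda-\mu}+1)}{2(q^{\lambda}-1)}{\lambda\brack\mu}_{q^2}$ are integers.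
   Context: Gaussian binomial coefficient: ${a\brack b}_Q=\prod_{i=0}^{b-1}\frac{Q^a-Q^i}{Q^b-Q^i}$ for integers $1\le b\le a$. *)

(* Defs.v *)
From HB Require Import structures.
From mathcomp Require Import all_boot all_order all_algebra.
Set Implicit Arguments. Unset Strict Implicit. Unset Printing Implicit Defensive.
Import Order.TTheory GRing.Theory Num.Theory.
Local Open Scope ring_scope.

Definition gauss_binom (Q : rat) (a b : nat) : rat :=
  \prod_(i < b) ((Q ^+ a - Q ^+ i) / (Q ^+ b - Q ^+ i)).

Definition is_integer (x : rat) : Prop := exists z : int, x = z%:~R.

Definition prime_power (q : nat) : Prop :=
  exists p k : nat, [/\ prime p, (0 < k)%N & q = (p ^ k)%N].

(* Main.v *)
Require Import Defs.
From HB Require Import structures.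
From mathcomp Require Import all_boot all_order all_algebra.
From mathcomp Require Import ring.
Import Order.TTheory GRing.Theory Num.Theory.
Local Open Scope ring_scope.

Section G.
Variable p : nat.
Hypothesis hp : (1 < p)%N.
Let x : rat := p%:R.

Definition NN (a b : nat) : rat := \prod_(i < b) (x ^+ a - x ^+ i).

Lemma xne (a b : nat) : a <> b -> x ^+ a - x ^+ b != 0.
Proof.
move=> hab; rewrite subr_eq0 /x -!natrX eqr_nat eqn_exp2l //; exact/eqP.
Qed.

Lemma xpos (a : nat) : x ^+ a != 0.
Proof. by rewrite /x -natrX pnatr_eq0 -lt0n expn_gt0 (ltn_trans _ hp). Qed.

Lemma gN a b : gauss_binom x a b = NN a b / NN b b.
Proof. by rewrite /gauss_binom prodf_div. Qed.

Lemma NN_bb b : NN b b != 0.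
Proof.
apply/prodf_neq0 => i _; apply/xne/eqP.
by rewrite eq_sym neq_ltn ltn_ord.
Qed.

Lemma NN_SS a b : NN a.+1 b.+1 = (x ^+ a.+1 - 1) * x ^+ b * NN a b.
Proof.
rewrite /NN big_ord_recl expr0 -mulrA; congr (_ * _).
have -> : x ^+ b = \prod_(i < b) x by rewrite prodr_const card_ord.
rewrite -big_split /=; apply: eq_bigr => i _.
by rewrite /bump /= add1n !exprS mulrBr.
Qed.

Lemma NN_S a b : NN a b.+1 = NN a b * (x ^+ a - x ^+ b).
Proof. by rewrite /NN big_ord_recr. Qed.

Lemma R1 a b : gauss_binom x a.+1 b.+1 = gauss_binom x a b * (x ^+ a.+1 - 1) / (x ^+ b.+1 - 1).
Proof.
have h1 : x ^+ b.+1 - 1 != 0 by rewrite -(expr0 x); apply: xne.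
have := NN_bb b; have := xpos b => h2 h3.
rewrite !gN !NN_SS; field.
by rewrite h1 h2 h3.
Qed.

Lemma R2 a b : gauss_binom x a b.+1 = gauss_binom x a b * (x ^+ a - x ^+ b) / ((x ^+ b.+1 - 1) * x ^+ b).
Proof.
have h1 : x ^+ b.+1 - 1 != 0 by rewrite -(expr0 x); apply: xne.
have := NN_bb b; have := xpos b => h2 h3.
rewrite !gN NN_SS NN_S; field.
by rewrite h1 h2 h3.
Qed.

Lemma P1 a b : gauss_binom x a.+1 b.+1 = gauss_binom x a b + x ^+ b.+1 * gauss_binom x a b.+1.
Proof.
have h1 : x * x ^+ b - 1 != 0 by rewrite -exprS -(expr0 x); apply: xne.
have := xpos b => h2.
rewrite R1 R2 !exprS; field.
by rewrite h1 h2.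
Qed.

Lemma P2 a b : (b <= a)%N ->
  gauss_binom x a.+1 b.+1 = x ^+ (a - b) * gauss_binom x a b + gauss_binom x a b.+1.
Proof.
move=> hba.
have h1 : x * x ^+ b - 1 != 0 by rewrite -exprS -(expr0 x); apply: xne.
have := xpos b => h2.
have ea : x ^+ a = x ^+ (a - b) * x ^+ b by rewrite -exprD subnK.
rewrite R1 R2 !exprS ea; field.
by rewrite h1 h2.
Qed.

Lemma G0 a : gauss_binom x a 0 = 1.
Proof. by rewrite /gauss_binom big_ord0. Qed.

Lemma G0S b : gauss_binom x 0 b.+1 = 0.
Proof. by rewrite /gauss_binom big_ord_recl subrr mul0r mul0r. Qed.

End G.

Lemma intD a b : is_integer a -> is_integer b -> is_integer (a + b).
Proof. by move=> [z ->] [w ->]; exists (z + w); rewrite rmorphD. Qed.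
Lemma intM a b : is_integer a -> is_integer b -> is_integer (a * b).
Proof. by move=> [z ->] [w ->]; exists (z * w); rewrite rmorphM. Qed.
Lemma intN a : is_integer a -> is_integer (- a).
Proof. by move=> [z ->]; exists (- z); rewrite rmorphN. Qed.
Lemma intn (n : nat) : is_integer n%:R.
Proof. by exists n%:Z. Qed.

Lemma gint p a b : (1 < p)%N -> is_integer (gauss_binom p%:R a b).
Proof.
move=> hp; elim: a b => [|a IH] [|b].
- by rewrite G0; exact: (intn 1).
- by rewrite G0S //; exact: (intn 0).
- by rewrite G0; exact: (intn 1).
- rewrite P1 //; apply: intD => //; apply: intM => //.
  by rewrite -natrX; exact: intn.
Qed.

Lemma int1 : is_integer 1. Proof. by exists 1. Qed.
Lemma int2 : is_integer 2. Proof. by exists 2. Qed.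

Lemma key (G G1 G0 c d T D al be w : rat) :
  G = G1 + c ^+ 2 * G0 -> G = d ^+ 2 * G1 + G0 -> D != 0 -> T = al + be ->
  al * (G1 + c ^+ 2 * G0) + be * (d ^+ 2 * G1 + G0) = w * D -> T / D * G = w.
Proof.
move=> h1 h2 hD hT hw; rewrite mulrAC; apply: (canLR (mulfK hD)).
by rewrite -hw hT mulrDl {1}h1 -h2.
Qed.

Ltac intt := repeat first [apply: intD | apply: intM | apply: intN | exact: int1 | exact: int2 | assumption].

Theorem corollary3p1 (q lam mu : nat)
  (hq : prime_power q) (hodd : odd q)
  (hmu : (0 < mu)%N) (hmul : (mu <= lam)%N) :
  let Q : rat := q%:R in
  let G := gauss_binom (Q ^+ 2) lam mu in
  (((q %% 4 = 3)%N /\ odd lam) ->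
     is_integer ((Q ^+ mu + 1) * (Q ^+ (lam - mu) + 1) / (2 * (Q ^+ lam + 1)) * G) /\
     is_integer ((Q ^+ mu - 1) * (Q ^+ (lam - mu) - 1) / (2 * (Q ^+ lam + 1)) * G)) /\
  ((((q %% 4 = 3)%N /\ ~~ odd lam) \/ (q %% 4 = 1)%N) ->
     is_integer ((Q ^+ mu + 1) * (Q ^+ (lam - mu) - 1) / (2 * (Q ^+ lam - 1)) * G) /\
     is_integer ((Q ^+ mu - 1) * (Q ^+ (lam - mu) + 1) / (2 * (Q ^+ lam - 1)) * G)).
Proof.
move=> Q G.
have q1 : (1 < q)%N.
  case: hq => p [k [pp k0 ->]].
  by rewrite (leq_trans (prime_gt1 pp)) // -{1}(expn1 p) leq_pexp2l // prime_gt0.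
have q21 : (1 < q ^ 2)%N by rewrite (leq_trans q1) // leq_pmulr // ltnW.
have hx : Q ^+ 2 = (q ^ 2)%:R by rewrite /Q natrX.
have hpow n : exists2 u, is_integer u & Q ^+ n = 2 * u + 1.
  exists ((q ^ n)./2)%:R; first exact: intn.
  rewrite /Q -natrX -{1}(odd_double_half (q ^ n)) oddX hodd orbT natrD -muln2 natrM.
  by rewrite addrC mulrC.
rewrite {}/G; case: mu hmu hmul => [|m] // _; case: lam => [|l] //; rewrite ltnS => hml.
rewrite !subSS.
set G := gauss_binom (Q ^+ 2) l.+1 m.+1.
have I1 : is_integer (gauss_binom (Q ^+ 2) l m) by rewrite hx; apply: gint.
have I0 : is_integer (gauss_binom (Q ^+ 2) l m.+1) by rewrite hx; apply: gint.
have HP1 : G = gauss_binom (Q ^+ 2) l m + (Q ^+ m.+1) ^+ 2 * gauss_binom (Q ^+ 2) l m.+1.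
  by rewrite /G hx P1 // -hx exprAC.
have HP2 : G = (Q ^+ (l - m)) ^+ 2 * gauss_binom (Q ^+ 2) l m + gauss_binom (Q ^+ 2) l m.+1.
  by rewrite /G hx P2 // -hx exprAC.
have hcd : Q ^+ l.+1 = Q ^+ m.+1 * Q ^+ (l - m) by rewrite -exprD addSn subnKC.
have hD1 : 2 * (Q ^+ m.+1 * Q ^+ (l - m) + 1) != 0.
  by rewrite mulf_neq0 // -hcd /Q -natrX natr1 pnatr_eq0.
have hD2 : 2 * (Q ^+ m.+1 * Q ^+ (l - m) - 1) != 0.
  rewrite mulf_neq0 // -hcd /Q -natrX subr_eq0 pnatr_eq1 -(expn0 q) eqn_exp2l //.
have [v Iv hc] := hpow m.+1.
have [u Iu hd] := hpow (l - m)%N.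
rewrite hcd.
move: HP1 HP2 hD1 hD2 hc hd.
set c := Q ^+ m.+1; set d := Q ^+ (l - m).
set G1 := gauss_binom _ l m; set G0 := gauss_binom _ l m.+1.
move=> HP1 HP2 hD1 hD2 hc hd.
split=> _; split.
- rewrite (@key _ _ _ _ _ _ _ (c * d + d + 1) (c) (G1 * (u + 1) + G0 * c * (v + 1)) HP1 HP2 hD1).
  + by rewrite hc; intt.
  + by ring.
  + by rewrite hc hd; ring.
- rewrite (@key _ _ _ _ _ _ _ (c * d - d + 1) (- c) (G0 * c * v - G1 * u) HP1 HP2 hD1).
  + by rewrite hc; intt.
  + by ring.
  + by rewrite hc hd; ring.
- rewrite (@key _ _ _ _ _ _ _ (c * d + d - 1) (- c) (G0 * c * (v + 1) - G1 * u) HP1 HP2 hD2).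
  + by rewrite hc; intt.
  + by ring.
  + by rewrite hc hd; ring.
- rewrite (@key _ _ _ _ _ _ _ (c * d - d - 1) (c) (G1 * (u + 1) + G0 * c * v) HP1 HP2 hD2).
  + by rewrite hc; intt.
  + by ring.
  + by rewrite hc hd; ring.
Qed.
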